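(* Let $S$ be a memory system satisfying the Data Independence assumption. Then for all $n,m \geq 1$: every trace of $S(n,m)$ is sequentially consistent if and only if every unambiguous trace of $S(n,m)$ is sequentially consistent.
   Context: Notation: $\mathbb{N}_n=\{1,\dots,n\}$, $\mathbb{W}_n=\{0,1,\dots,n\}$, $\mathbb{W}=\{0,1,2,\dots\}$. For $n,m,v\ge 1$ the memory events are $E(n,m,v)=\{R,W\}\times\mathbb{N}_n\times\mathbb{N}_m\times\mathbb{W}_v$ (read events have first component $R$, write events $W$); for $e=\langle a,b,c,d\rangle$ write $op(e)=a$, $proc(e)=b$ (processor), $loc(e)=c$ (location), $data(e)=d$. The value $0$ models the initial value of every location. A memory system is a family $S=(S(n,m,v))_{n,m,v\ge1}$ where $S(n,m,v)$ is a regular set of finite sequences (runs) over an alphabet $E^a(n,m,v)\supseteq E(n,m,v)$ (letters outside $E(n,m,v)$ are internal events); $S(n,m)=\bigcup_{v\ge1}S(n,m,v)$. The trace of a run is its subsequence of memory events; the traces of $S(n,m,v)$ (resp. $S(n,m)$) are the traces of its runs. For a finite sequence $\tau$ of memory events with positions $1,\dots,|\tau|$: $P(\tau,i)=\{k: proc(\tau(k))=i\}$, $L(\tau,j)=\{k: loc(\tau(k))=j\}$, $L^w(\tau,j)=\{k\in L(\tau,j): op(\tau(k))=W\}$. A trace $\tau$ is unambiguous if for every location $j$ and every $x\in L^w(\tau,j)$: $data(\tau(x))\ne0$ and $data(\tau(x))\ne data(\tau(y))$ for all $y\in L^w(\tau,j)\setminus\{x\}$. A renaming function is $\lambda:\mathbb{N}_m\times\mathbb{W}\to\mathbb{W}$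 with $\lambda(j,0)=0$ for all $j$; it induces $\lambda^d(\langle a,b,c,d\rangle)=\langle a,b,c,\lambda(c,d)\rangle$, applied letterwise to sequences. Data Independence assumption: for all $n,m,v\ge1$ and all $\tau\in E(n,m,v)^*$, $\tau$ is a trace of $S(n,m,v)$ iff there are an unambiguous trace $\tau'$ of $S(n,m)$ and a renaming function $\lambda:\mathbb{N}_m\times\mathbb{W}\to\mathbb{W}_v$ with $\tau=\lambda^d(\tau')$. A sequence $\tau$ of memory events is serial if for every position $u$, letting $upto(\tau,u)=\{k\le u: op(\tau(k))=W,\ loc(\tau(k))=loc(\tau(u))\}$, we have $data(\tau(u))=0$ if $upto(\tau,u)=\emptyset$ and $data(\tau(u))=data(\tau(\max upto(\tau,u)))$ otherwise. For processor $i$, $M(\tau,i)=\{\langle u,v\rangle: u,v\in P(\tau,i),\ u<v\}$. The sequence $\tau$ is sequentially consistent if there is a permutation $f$ of $\mathbb{N}_{|\tau|}$ such that (C1) $\langle u,v\rangle\in M(\tau,i)$ for some $i$ implies $f(u)<f(v)$, and (C2) $\tau_{f^{-1}(1)}\tau_{f^{-1}(2)}\cdots\tau_{f^{-1}(|\tau|)}$ is serial. *)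

(* Defs.v *)
From Stdlib Require List.
From mathcomp Require Import all_boot all_fingroup.
Set Implicit Arguments. Unset Strict Implicit. Unset Printing Implicit Defensive.

Inductive opk := Rd | Wr.

Definition event := (opk * nat * nat * nat)%type.
Definition op (e : event) : opk := e.1.1.1.
Definition proc (e : event) : nat := e.1.1.2.
Definition loc (e : event) : nat := e.1.2.
Definition data (e : event) : nat := e.2.
Definition is_write (e : event) : bool := if op e is Wr then true else false.

Definition in_E (n m v : nat) (e : event) : Prop :=
  1 <= proc e <= n /\ 1 <= loc e <= m /\ data e <= v.

(* Runs of S(n,m,v) are words over E^a(n,m,v) = E(n,m,v) + Int n m v, where
   Int n m v is a finite type of internal events. *)
Definition letter (Int : nat -> nat -> nat -> finType) n m v :=
  (event + Int n m v)%type.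

Definition over_alphabet Int n m v (r : seq (letter Int n m v)) : Prop :=
  forall l, List.In l r -> match l with inl e => in_E n m v e | inr _ => True end.

Definition regular Int n m v (L : seq (letter Int n m v) -> Prop) : Prop :=
  exists (Q : finType) (q0 : Q) (delta : Q -> letter Int n m v -> Q) (F : pred Q),
    forall r, over_alphabet r -> (L r <-> F (foldl delta q0 r)).

Definition memory_system (Int : nat -> nat -> nat -> finType)
  (S : forall n m v, seq (letter Int n m v) -> Prop) : Prop :=
  forall n m v, 1 <= n -> 1 <= m -> 1 <= v ->
    (forall r, S n m v r -> over_alphabet r) /\ regular (S n m v).

Definition trace Int n m v (r : seq (letter Int n m v)) : seq event :=
  pmap (fun l => match l with inl e => Some e | inr _ => None end) r.

Definition is_trace_nmv Int (S : forall n m v, seq (letter Int n m v) -> Prop)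
  n m v (t : seq event) : Prop :=
  exists r, S n m v r /\ trace r = t.

Definition is_trace_nm Int (S : forall n m v, seq (letter Int n m v) -> Prop)
  n m (t : seq event) : Prop :=
  exists v, 1 <= v /\ is_trace_nmv S n m v t.

Definition ev0 : event := (Rd, 0, 0, 0).

(* Positions are 0-based internally (position k here is position k+1 in the paper). *)
Definition unambiguous (t : seq event) : Prop :=
  forall x, x < size t -> is_write (nth ev0 t x) ->
    data (nth ev0 t x) <> 0 /\
    forall y, y < size t -> y <> x -> is_write (nth ev0 t y) ->
      loc (nth ev0 t y) = loc (nth ev0 t x) ->
      data (nth ev0 t x) <> data (nth ev0 t y).

Definition renaming_into (m v : nat) (lam : nat -> nat -> nat) : Prop :=
  forall j, 1 <= j <= m -> lam j 0 = 0 /\ forall d, lam j d <= v.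

Definition rename_d (lam : nat -> nat -> nat) (e : event) : event :=
  (op e, proc e, loc e, lam (loc e) (data e)).

Definition data_independent Int (S : forall n m v, seq (letter Int n m v) -> Prop) : Prop :=
  forall n m v, 1 <= n -> 1 <= m -> 1 <= v ->
  forall t : seq event, (forall e, List.In e t -> in_E n m v e) ->
    (is_trace_nmv S n m v t <->
     exists t' lam, is_trace_nm S n m t' /\ unambiguous t' /\
       renaming_into m v lam /\ t = map (rename_d lam) t').

Definition upto (t : seq event) (u : nat) : seq nat :=
  [seq k <- iota 0 u.+1 | is_write (nth ev0 t k) && (loc (nth ev0 t k) == loc (nth ev0 t u))].

Definition serial (t : seq event) : Prop :=
  forall u, u < size t ->
    data (nth ev0 t u) =
      (if upto t u is [::] then 0 else data (nth ev0 t (last 0 (upto t u)))).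

Definition sequentially_consistent (t : seq event) : Prop :=
  exists f : {perm 'I_(size t)},
    (forall u w : 'I_(size t), proc (nth ev0 t u) = proc (nth ev0 t w) -> u < w -> f u < f w) /\
    serial [seq nth ev0 t ((f^-1)%g k) | k <- enum 'I_(size t)].

(* Main.v *)
Require Import Defs.
From mathcomp Require Import all_boot all_fingroup.

Lemma nth_In_ev (s : seq event) i : i < size s -> List.In (nth ev0 s i) s.
Proof.
elim: s i => [|a s IH] [|i] //= H; [by left | right; exact: IH].
Qed.

Lemma serial_rename lam (s : seq event) :
  (forall i, i < size s -> lam (loc (nth ev0 s i)) 0 = 0) ->
  serial s -> serial (map (rename_d lam) s).
Proof.
move=> H0 Hs u; rewrite size_map => Hu.
have Hup : upto (map (rename_d lam) s) u = upto s u.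
  rewrite /upto; apply: eq_in_filter => k; rewrite mem_iota add0n => /andP [_ Hk].
  have Hk' : k < size s by apply: leq_trans Hk Hu.
  by rewrite !(nth_map ev0) //.
rewrite Hup (nth_map ev0) // {1}/data /= (Hs u Hu).
case E: (upto s u) => [|a l] /=.
  by rewrite H0.
have Hin : last a l \in upto s u by rewrite E mem_last.
move: Hin; rewrite /upto mem_filter mem_iota add0n => /andP [/andP [_ /eqP Hl] /andP [_ Hk]].
have Hk' : last a l < size s by apply: leq_trans Hk Hu.
by rewrite (nth_map ev0) // /rename_d /data /= -Hl.
Qed.

Lemma sc_rename lam (t' : seq event) :
  (forall i, i < size t' -> lam (loc (nth ev0 t' i)) 0 = 0) ->
  sequentially_consistent t' -> sequentially_consistent (map (rename_d lam) t').
Proof.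
move=> H0 [f [Hf Hs]]; rewrite /sequentially_consistent size_map.
exists f; split.
  move=> u w; rewrite !(nth_map ev0) //; exact: Hf.
have -> : [seq nth ev0 [seq rename_d lam i | i <- t'] ((f^-1)%g k) | k <- enum 'I_(size t')]
  = map (rename_d lam) [seq nth ev0 t' ((f^-1)%g k) | k <- enum 'I_(size t')].
  rewrite -map_comp; apply: eq_map => k /=; by rewrite (nth_map ev0).
apply: serial_rename => //.
move=> i; rewrite size_map size_enum_ord => Hi.
pose k0 : 'I_(size t') := Ordinal Hi.
rewrite (nth_map k0) ?size_enum_ord //; exact: H0.
Qed.

Theorem theorem4p1 (Int : nat -> nat -> nat -> finType)
  (S : forall n m v, seq (letter Int n m v) -> Prop) :
  memory_system S -> data_independent S ->
  forall n m, 1 <= n -> 1 <= m ->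
    ((forall t, is_trace_nm S n m t -> sequentially_consistent t) <->
     (forall t, is_trace_nm S n m t -> unambiguous t -> sequentially_consistent t)).
Proof.
move=> HS HDI n m Hn Hm; split; first by move=> H t Ht _; exact: H.
move=> H t [v [Hv Ht]].
have HE : forall e, List.In e t -> in_E n m v e.
  case: Ht => r [Hr <-] e.
  have Hr' := (HS n m v Hn Hm Hv).1 r Hr.
  elim: r Hr' {Hr} => [|l r IH] //= Hr'.
  case: l Hr' => [e'|x] Hr' /=.
    case=> [<-|Hin]; first by apply: (Hr' (inl e')); left.
    apply: IH => // l Hl; apply: Hr'; by right.
  move=> Hin; apply: IH => // l Hl; apply: Hr'; by right.
have [t' [lam [Ht' [Hu [Hlam Et]]]]] := (HDI n m v Hn Hm Hv t HE).1 Ht.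
rewrite Et; apply: sc_rename; last exact: H.
move=> i Hi.
have Hi2 : i < size t by rewrite Et size_map.
have [_ [Hl _]] := HE _ (@nth_In_ev t i Hi2).
move: Hl; rewrite Et (nth_map ev0) // => Hl.
exact: (Hlam _ Hl).1.
Qed.
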